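(* Let $\mathcal{X}$ be an input space, let $\mathcal{H}$ be a class of hypotheses $h:\mathcal{X}\to\{0,1\}$ with VC-dimension $d$, let $M\ge 1$, let $\mathcal{S}_1,\dots,\mathcal{S}_M$ (source domains) and $\mathcal{T}$ (target domain) be domains on $\mathcal{X}$, and let $n$ be a positive integer divisible by $M$. For each $j\in\{1,\dots,M\}$ draw a labeled sample of $n/M$ points i.i.d. from $\mathcal{S}_j$ (labels given by $f_{\mathcal{S}_j}$), and draw an unlabeled sample of $n$ points i.i.d. from $\mathcal{T}$; for each $\alpha\in\Delta$ the empirical divergence $\widehat d_{\mathcal{H}\Delta\mathcal{H}}(\mathcal{S}_\alpha,\mathcal{T})$ is computed from this target sample together with an unlabeled sample of $n$ points drawn i.i.d. from $\mathcal{S}_\alpha$. Let $\delta\in(0,1)$. Then for any $h\in\mathcal{H}$ and any $\alpha\in\Delta$, with probability at least $1-\delta$ over the choice of samples, $$\varepsilon_{\mathcal{T}}(h)\le \sum_{j=1}^M \alpha_j\,\widehat{\varepsilon}_{\mathcal{S}_j}(h)+\tfrac12\,\widehat d_{\mathcal{H}\Delta\mathcal{H}}(\mathcal{S}_\alpha,\mathcal{T})+\lambda_\alpha+B_\alpha(\delta)+V(\delta),$$ where $$B_\alpha(\delta)=2\sqrt{\frac{M\left(2d\log(2(n+1))+\log(8/\delta)\right)}{n}\sum_{j=1}^M\alpha_j^2},\qquad \lambda_\alpha=\min_{h'\in\mathcal{H}}\Big(\sum_{j=1}^M\alpha_j\varepsilon_{\mathcal{S}_j}(h')+\varepsilon_{\mathcal{T}}(h')\Big),$$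 $$V(\delta)=2\sqrt{\frac{2d\log(2n)+\log(4/\delta)}{n}}.$$
   Context: Binary deterministic setting: a domain $\mathcal{D}$ is a probability distribution on $\mathcal{X}$ together with a labeling function $f_{\mathcal{D}}:\mathcal{X}\to\{0,1\}$ (the label of $x$ is $f_{\mathcal{D}}(x)$). The risk of $h$ on $\mathcal{D}$ is $\varepsilon_{\mathcal{D}}(h)=\Pr_{x\sim\mathcal{D}}(h(x)\ne f_{\mathcal{D}}(x))$, and $\widehat{\varepsilon}_{\mathcal{S}_j}(h)$ is the empirical risk (fraction of misclassified points) of $h$ on the labeled sample from $\mathcal{S}_j$. $\Delta=\{\alpha\in\mathbb{R}^M:\alpha_j\ge0,\ \sum_j\alpha_j=1\}$ is the probability simplex, and $\mathcal{S}_\alpha=\sum_{j=1}^M\alpha_j\mathcal{S}_j$ is the mixture distribution, whose risk satisfies $\varepsilon_{\mathcal{S}_\alpha}(h)=\sum_j\alpha_j\varepsilon_{\mathcal{S}_j}(h)$. The symmetric difference class is $\mathcal{H}\Delta\mathcal{H}=\{x\mapsto h(x)\oplus h'(x): h,h'\in\mathcal{H}\}$ ($\oplus$ = exclusive or). For a class $\mathcal{G}$ of $\{0,1\}$-valued functions, the $\mathcal{G}$-divergence between distributions $\mathcal{D},\mathcal{D}'$ is $d_{\mathcal{G}}(\mathcal{D},\mathcal{D}')=2\sup_{g\in\mathcal{G}}|\Pr_{\mathcal{D}}(g(x)=1)-\Pr_{\mathcal{D}'}(g(x)=1)|$; its empirical version $\widehat d_{\mathcal{G}}(\mathcal{D},\mathcal{D}')$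 is obtained by replacing both probabilities with empirical frequencies on unlabeled samples of size $n$ from $\mathcal{D}$ and $\mathcal{D}'$. *)

(* Defs.v *)
From HB Require Import structures.
From mathcomp Require Import all_boot all_order all_algebra.
From mathcomp Require Import all_classical all_reals all_analysis.
Set Implicit Arguments. Unset Strict Implicit. Unset Printing Implicit Defensive.
Import Order.TTheory GRing.Theory Num.Theory.
Local Open Scope classical_set_scope.
Local Open Scope ring_scope.

Definition shatters (X : Type) (H : set (X -> bool)) (s : seq X) : Prop :=
  forall B : X -> bool, exists h, H h /\ forall k, (k < size s)%N ->
    forall x0, h (nth x0 s k) = B (nth x0 s k).

Definition distinct (X : Type) (s : seq X) : Prop :=
  forall x0 k l, (k < size s)%N -> (l < size s)%N -> nth x0 s k = nth x0 s l -> k = l.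

Definition VCdim (X : Type) (H : set (X -> bool)) (d : nat) : Prop :=
  (exists s : seq X, distinct s /\ size s = d /\ shatters H s) /\
  (forall s : seq X, distinct s -> shatters H s -> (size s <= d)%N).

Definition symdiff_class (X : Type) (H : set (X -> bool)) : set (X -> bool) :=
  [set g | exists h h', H h /\ H h' /\ g = (fun x => xorb (h x) (h' x))].

Section Risks.
Context {R : realType} {dX : measure_display} {X : measurableType dX}.

Definition risk (D : probability X R) (f : X -> bool) (h : X -> bool) : R :=
  fine (D [set x | h x != f x]).

Definition emp_risk (k : nat) (xs : 'I_k -> X) (f : X -> bool) (h : X -> bool) : R :=
  (\sum_(i < k) (h (xs i) != f (xs i))%:R) / k%:R.

Definition emp_freq (k : nat) (xs : 'I_k -> X) (g : X -> bool) : R :=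
  (\sum_(i < k) (g (xs i))%:R) / k%:R.

Definition emp_div (G : set (X -> bool)) (k : nat) (xs ys : 'I_k -> X) : R :=
  2 * sup [set `|emp_freq xs g - emp_freq ys g| | g in G].

Definition mixture (M : nat) (alpha : 'I_M -> R) (S : 'I_M -> probability X R)
  (A : set X) : \bar R := (\sum_(j < M) (alpha j)%:E * S j A)%E.

End Risks.

Definition simplex {R : realType} (M : nat) (alpha : 'I_M -> R) : Prop :=
  (forall j, 0 <= alpha j) /\ \sum_(j < M) alpha j = 1.

Definition mutually_independent {R : realType} {dO dX : measure_display}
  {O : measurableType dO} {X : measurableType dX}
  (P : probability O R) (I : finType) (Z : I -> O -> X) : Prop :=
  forall A : I -> set X, (forall i, measurable (A i)) ->
    P (\big[setI/setT]_(i : I) (Z i @^-1` A i)) =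
    (\prod_(i : I) fine (P (Z i @^-1` A i)))%:E.

(* the whole sample: labeled source points (j,i), target points, S_alpha points *)
Definition all_samples {O : Type} {X : Type} (M m n : nat)
  (Xs : 'I_M -> 'I_m -> O -> X) (Xt Xa : 'I_n -> O -> X) :
  ('I_M * 'I_m + ('I_n + 'I_n))%type -> O -> X :=
  fun k => match k with
           | inl p => Xs p.1 p.2
           | inr (inl i) => Xt i
           | inr (inr i) => Xa i
           end.

(* Main.v *)
Require Import Defs.
From HB Require Import structures.
From mathcomp Require Import all_boot all_order all_algebra.
From mathcomp Require Import all_classical all_reals all_analysis.
From mathcomp Require Import lra zify ring.
From Stdlib Require Import Lia.
Import Order.TTheory GRing.Theory Num.Theory.
Local Open Scope classical_set_scope.
Local Open Scope ring_scope.

Lemma fact_bound j : (2 ^ j * j`! <= (j.*2)`!)%N.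
Proof.
elim: j => [//|j IH].
rewrite doubleS !factS expnS.
move: IH; move: (2 ^ j)%N (j`!) ((j.*2)`!) => a b c IH.
rewrite -!muln2; nia.
Qed.

Section An.
Variable R : realType.

Lemma cosh_le (x : R) : expR x + expR (- x) <= 2 * expR (x ^+ 2 / 2).
Proof.
pose a k := exp_coeff x k + exp_coeff (- x) k.
have aE k : a k = (x ^+ k + (- x) ^+ k) / k`!%:R.
  by rewrite /a /exp_coeff /= mulrDl.
have a_even j : a (j.*2) = 2 * (x ^+ (j.*2) / (j.*2)`!%:R).
  by rewrite aE -mul2n !exprM sqrrN -exprM mulrDl -mulr2n mulr_natl mul2n.
have a_odd j : a (j.*2.+1) = 0.
  by rewrite aE exprS [(- x) ^+ _]exprS -mul2n !exprM sqrrN mulNr addrN mul0r.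
have a_ge0 k : 0 <= a k.
  rewrite -[k]odd_double_half; case: (odd k) => /=.
    by rewrite add1n a_odd.
  by rewrite add0n a_even mulr_ge0 // divr_ge0 // -mul2n exprM exprn_ge0 // sqr_ge0.
have sum2 N : \sum_(0 <= k < N.*2) a k = \sum_(0 <= j < N) a (j.*2).
  elim: N => [|N IH]; first by rewrite !big_geq.
  rewrite doubleS !big_nat_recr //= IH a_odd addr0 //.
have key N : \sum_(0 <= k < N) a k <= 2 * \sum_(0 <= j < N) exp_coeff (x ^+ 2 / 2) j.
  apply: (@le_trans _ _ (\sum_(0 <= k < N.*2) a k)).
    rewrite [X in _ <= X](big_cat_nat (n := N)) //=; try by rewrite -?addnn; lia.
    by rewrite lerDl sumr_ge0.
  rewrite sum2 mulr_sumr; apply: ler_sum => j _.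
  rewrite a_even ler_pM2l // /exp_coeff /=.
  rewrite expr_div_n -exprM -mul2n -mulrA -invfM.
  apply: ler_wpM2l; first by rewrite exprM exprn_ge0 // sqr_ge0.
  rewrite lef_pV2 ?posrE ?mulr_gt0 ?exprn_gt0 ?ltr0n ?fact_gt0 //.
  by rewrite -natrX -natrM ler_nat mul2n; exact: fact_bound.
have f1 : (fun N => \sum_(0 <= k < N) a k) @ \oo --> expR x + expR (- x).
  rewrite (_ : (fun N => _) = series (exp_coeff x) \+ series (exp_coeff (- x))).
    by apply: cvgD; exact: is_cvg_series_exp_coeff.
  by apply/funext => N; rewrite /series /= big_split.
have f2 : (series (exp_coeff (x ^+ 2 / 2)) \+ series (exp_coeff (x ^+ 2 / 2))) @ \oo
     --> expR (x ^+ 2 / 2) + expR (x ^+ 2 / 2).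
  by apply: cvgD; exact: is_cvg_series_exp_coeff.
rewrite mulr_natl mulr2n.
apply: (ler_cvg_to f1 f2); apply: nearW => N /=.
rewrite -mulr2n; have := key N; by rewrite mulr_natl.
Qed.

Lemma eq_leq (x y : R) : x = y -> x <= y. Proof. by move->. Qed.

Lemma expR_tangent (u v : R) : expR v * (1 + (u - v)) <= expR u.
Proof.
have -> : expR u = expR (u - v) * expR v by rewrite -expRD subrK.
rewrite mulrC ler_wpM2r ?expR_ge0 //.
exact: expR_ge1Dx.
Qed.

Lemma expR_chord (s z : R) : -1 <= z <= 1 ->
  expR (s * z) <= (1 + z) / 2 * expR s + (1 - z) / 2 * expR (- s).
Proof.
move=> /andP[z1 z2].
have w1 : 0 <= (1 + z) / 2 by rewrite divr_ge0 //; lra.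
have w2 : 0 <= (1 - z) / 2 by rewrite divr_ge0 //; lra.
apply: (@le_trans _ _ ((1 + z) / 2 * (expR (s * z) * (1 + (s - s * z))) +
                       (1 - z) / 2 * (expR (s * z) * (1 + (- s - s * z))))).
  by apply: eq_leq; field.
by apply: lerD; apply: ler_wpM2l => //; exact: expR_tangent.
Qed.

Lemma hoeff (p s : R) : 0 <= p <= 1 ->
  p * expR (s * (1 - p)) + (1 - p) * expR (- (s * p)) <= expR (s ^+ 2 / 2).
Proof.
move=> /andP[p0 p1].
have q0 : 0 <= 1 - p by lra.
apply: (@le_trans _ _ (p * ((1 + (1 - p)) / 2 * expR s + (1 - (1 - p)) / 2 * expR (- s))
   + (1 - p) * ((1 + - p) / 2 * expR s + (1 - - p) / 2 * expR (- s)))).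
  apply: lerD; apply: ler_wpM2l => //.
    by apply: expR_chord; lra.
  by rewrite -mulrN; apply: expR_chord; lra.
have := cosh_le s; set e := expR s; set e' := expR (- s); move=> h.
apply: (@le_trans _ _ ((e + e') / 2)); last by lra.
by apply: eq_leq; field.
Qed.
End An.

Lemma in_bigsetI (T : eqType) (U : Type) (r : seq T) (F : T -> set U) (w : U) :
  (\big[setI/setT]_(i <- r) F i) w <-> (forall i, i \in r -> F i w).
Proof.
elim: r => [|a r IH]; first by rewrite big_nil.
rewrite big_cons; split.
  move=> [Ha /IH Hr] i; rewrite inE => /orP[/eqP->//|]; exact: Hr.
move=> H; split; first by apply: H; rewrite inE eqxx.
by apply/IH => i ir; apply: H; rewrite inE ir orbT.
Qed.

Lemma in_bigsetU (T : eqType) (U : Type) (r : seq T) (Q : pred T) (F : T -> set U) (w : U) :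
  (\big[setU/set0]_(i <- r | Q i) F i) w <-> (exists i, [/\ i \in r, Q i & F i w]).
Proof.
elim: r => [|a r IH]; first by rewrite big_nil; split => [[]|[i []]].
rewrite big_cons; split.
  case: ifP => Qa.
    move=> [Fa|/IH [i [ir Qi Fi]]]; first by exists a; rewrite inE eqxx.
    by exists i; rewrite inE ir orbT.
  by move=> /IH [i [ir Qi Fi]]; exists i; rewrite inE ir orbT.
move=> [i [ir Qi Fi]]; move: ir; rewrite inE => /orP[/eqP Ei|ir].
  by subst i; rewrite Qi; left.
case: ifP => _; last by apply/IH; exists i.
by right; apply/IH; exists i.
Qed.

Section Cells.
Context {R : realType} {dO dX : measure_display} {O : measurableType dO}
  {X : measurableType dX} (P : probability O R) (I : finType)
  (Z : I -> O -> X) (A : I -> set X).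
Hypothesis mZ : forall i, measurable_fun setT (Z i).
Hypothesis mA : forall i, measurable (A i).
Hypothesis ind : mutually_independent P Z.

Definition bit i w : bool := `[< A i (Z i w) >].
Definition sel (b : {ffun I -> bool}) i : set X := if b i then A i else ~` A i.
Definition cell (b : {ffun I -> bool}) : set O :=
  \big[setI/setT]_(i : I) (Z i @^-1` sel b i).
Definition pw w : {ffun I -> bool} := [ffun i => bit i w].
Definition pr i : R := fine (P (Z i @^-1` A i)).
Definition q i (bb : bool) : R := if bb then pr i else 1 - pr i.

Lemma meas_pre i B : measurable B -> measurable (Z i @^-1` B).
Proof. by move=> mB; have := mZ i measurableT _ mB; rewrite setTI. Qed.

Lemma meas_cell b : measurable (cell b).
Proof.
rewrite /cell; elim/big_ind: _ => //; first exact: measurableI.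
move=> i _; apply: meas_pre; rewrite /sel; case: (b i) => //.
exact: measurableC.
Qed.

Lemma pr_ge0 i : 0 <= pr i.
Proof. by rewrite /pr fine_ge0. Qed.

Lemma pr_le1 i : pr i <= 1.
Proof.
rewrite /pr -lee_fin fineK ?fin_num_measure //; last exact: meas_pre.
by apply: probability_le1; exact: meas_pre.
Qed.

Lemma P_cell b : P (cell b) = (\prod_i q i (b i))%:E.
Proof.
rewrite /cell ind; last by move=> i; rewrite /sel; case: (b i) => //; exact: measurableC.
congr (_%:E); apply: eq_bigr => i _; rewrite /q /sel; case: (b i) => //.
rewrite -preimage_setC probability_setC; last exact: meas_pre.
rewrite fineB ?fin_num_measure //; exact: meas_pre.
Qed.

Lemma cell_mem b w : cell b w <-> b = pw w.
Proof.
rewrite /cell in_bigsetI; split.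
  move=> H; apply/ffunP => i; rewrite /pw ffunE /bit.
  have := H i (mem_index_enum i); rewrite /sel /preimage /=.
  by case: (b i) => h; apply/esym; [apply/asboolT|apply/asboolF].
move=> -> i _; rewrite /sel /pw ffunE /bit /preimage /=.
by case: asboolP.
Qed.

Lemma event_cells (Q : pred {ffun I -> bool}) :
  [set w | Q (pw w)] = \big[setU/set0]_(b | Q b) cell b.
Proof.
apply/seteqP; split => w /=.
  by move=> Qw; apply/in_bigsetU; exists (pw w); split => //;
    [exact: mem_index_enum | exact/cell_mem].
by move/in_bigsetU => [b [_ Qb /cell_mem <-]].
Qed.

Lemma meas_event (Q : pred {ffun I -> bool}) : measurable [set w | Q (pw w)].
Proof. by rewrite event_cells; apply: bigsetU_measurable => b _; exact: meas_cell. Qed.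

Lemma cells_disj b b' : b != b' -> cell b `&` cell b' = set0.
Proof.
move=> bb; apply/seteqP; split => // w [/cell_mem h1 /cell_mem h2].
by move: bb; rewrite h1 h2 eqxx.
Qed.

Lemma P_big (r : seq {ffun I -> bool}) (Q : pred {ffun I -> bool}) : uniq r ->
  P (\big[setU/set0]_(b <- r | Q b) cell b) = (\sum_(b <- r | Q b) \prod_i q i (b i))%:E.
Proof.
elim: r => [|a r IH]; first by rewrite !big_nil measure0.
rewrite /= => /andP[ar ur]; rewrite !big_cons; case: ifP => Qa; last exact: IH.
rewrite measureU //.
- by rewrite EFinD -IH // -(P_cell a).
- exact: meas_cell.
- by apply: bigsetU_measurable => b _; exact: meas_cell.
apply/seteqP; split => // w [ca /in_bigsetU [b [br _ cb]]].
have : cell a `&` cell b = set0 by apply: cells_disj; apply: contraNneq ar => ->.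
by move=> /seteqP[+ _] => /(_ w (conj ca cb)).
Qed.

Lemma P_event (Q : pred {ffun I -> bool}) :
  P [set w | Q (pw w)] = (\sum_(b | Q b) \prod_i q i (b i))%:E.
Proof. by rewrite event_cells P_big // index_enum_uniq. Qed.


Lemma chernoff_cells (c : I -> R) (t s : R) : 0 <= s ->
  (P [set w | (t <= \sum_i c i * ((bit i w)%:R - pr i))%R] <=
  (expR (- (s * t) + s ^+ 2 / 2 * \sum_i c i ^+ 2))%:E)%E.
Proof.
move=> s0.
pose Sb (b : {ffun I -> bool}) := \sum_i c i * ((b i)%:R - pr i).
have -> : [set w | t <= \sum_i c i * ((bit i w)%:R - pr i)] =
          [set w | (fun b => t <= Sb b) (pw w)].
  have SbE w : Sb (pw w) = \sum_i c i * ((bit i w)%:R - pr i).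
    by apply: eq_bigr => i _; rewrite /pw ffunE.
  by apply/seteqP; split => w /=; rewrite SbE.
rewrite (P_event (fun b => t <= Sb b)) lee_fin.
apply: (@le_trans _ _ (\sum_(b : {ffun I -> bool}) (\prod_i q i (b i)) * expR (s * (Sb b - t)))).
  rewrite [leRHS](bigID (fun b => t <= Sb b)) /= -[leLHS]addr0.
  apply: lerD; last first.
    by apply: sumr_ge0 => b _; rewrite mulr_ge0 ?expR_ge0 // prodr_ge0 // => i _;
      rewrite /q; case: (b i); rewrite ?pr_ge0 // subr_ge0 pr_le1.
  apply: ler_sum => b tS.
  have q0 : 0 <= \prod_i q i (b i).
    by rewrite prodr_ge0 // => i _; rewrite /q; case: (b i); rewrite ?pr_ge0 // subr_ge0 pr_le1.
  rewrite -[leLHS]mulr1 ler_wpM2l // -expR0 ler_expR mulr_ge0 // subr_ge0 //.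
have E1 (b : {ffun I -> bool}) : (\prod_i q i (b i)) * expR (s * (Sb b - t)) =
    expR (- (s * t)) * \prod_i (q i (b i) * expR (s * c i * ((b i)%:R - pr i))).
  rewrite big_split /= -expR_sum. rewrite mulrCA -expRD; congr (_ * expR _).
  rewrite /Sb mulrBr mulr_sumr addrC; congr (_ + _).
  by apply: eq_bigr => i _; rewrite mulrA.
under eq_bigr do rewrite E1.
rewrite -mulr_sumr -(bigA_distr_bigA (fun i0 (bb : bool) => q i0 bb * expR (s * c i0 * (bb%:R - pr i0)))) expRD ler_wpM2l ?expR_ge0 //.
rewrite mulr_sumr expR_sum; apply: ler_prod => i _; apply/andP; split.
  by rewrite sumr_ge0 // => bb _; rewrite mulr_ge0 ?expR_ge0 // /q; case: bb;
    rewrite ?pr_ge0 // subr_ge0 pr_le1.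
rewrite big_bool /q /=.
have := @hoeff R (pr i) (s * c i); rewrite pr_ge0 pr_le1 => /(_ isT).
rewrite mulr1n mulr0n sub0r mulrN.
by rewrite (_ : s ^+ 2 / 2 * c i ^+ 2 = (s * c i) ^+ 2 / 2) //; ring.
Qed.

Lemma chernoff_opt (c : I -> R) (t : R) : 0 < t -> 0 < \sum_i c i ^+ 2 ->
  (P [set w | (t <= \sum_i c i * ((bit i w)%:R - pr i))%R] <=
  (expR (- (t ^+ 2 / (2 * \sum_i c i ^+ 2))))%:E)%E.
Proof.
move=> t0 C0; set C := \sum_i c i ^+ 2.
have := @chernoff_cells c t (t / C) (divr_ge0 (ltW t0) (ltW C0)).
congr (_ <= (expR _)%:E)%E; rewrite -/C; field.
by rewrite gt_eqF.
Qed.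

Lemma meas_sumevent (c : I -> R) (t : R) :
  measurable [set w | (t <= \sum_i c i * ((bit i w)%:R - pr i))%R].
Proof.
pose Sb (b : {ffun I -> bool}) := \sum_i c i * ((b i)%:R - pr i).
have -> : [set w | t <= \sum_i c i * ((bit i w)%:R - pr i)] =
          [set w | (fun b => t <= Sb b) (pw w)].
  have SbE w : Sb (pw w) = \sum_i c i * ((bit i w)%:R - pr i).
    by apply: eq_bigr => i _; rewrite /pw ffunE.
  by apply/seteqP; split => w /=; rewrite SbE.
exact: (meas_event (fun b => t <= Sb b)).
Qed.

End Cells.

Section Helpers.
Context {R : realType} {dX : measure_display} {X : measurableType dX}.

Lemma meas_neq (a b : X -> bool) : measurable [set x | a x] -> measurable [set x | b x] ->
  measurable [set x | a x != b x].
Proof.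
move=> ma mb.
have -> : [set x | a x != b x] =
   ([set x | a x] `&` ~` [set x | b x]) `|` (~` [set x | a x] `&` [set x | b x]).
  apply/seteqP; split => x /=; case: (a x); case: (b x) => //=.
  - by move=> _; left.
  - by move=> _; right.
  - by case=> -[].
  - by case=> -[].
by apply: measurableU; apply: measurableI => //; exact: measurableC.
Qed.

Lemma fine_sub (D : probability X R) (U V W : set X) :
  measurable U -> measurable V -> measurable W -> U `<=` V `|` W ->
  fine (D U) <= fine (D V) + fine (D W).
Proof.
move=> mU mV mW UVW.
rewrite -lee_fin EFinD !fineK ?fin_num_measure //.
apply: (le_trans (le_measure _ _ _ UVW)); rewrite ?inE //; first exact: measurableU.
exact: measureU2.
Qed.

Lemma mixtureE (M : nat) (alpha : 'I_M -> R) (S : 'I_M -> probability X R) (G : set X) :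
  measurable G -> mixture alpha S G = (\sum_j alpha j * fine (S j G))%:E.
Proof.
move=> mG; rewrite /mixture -sumEFin; apply: eq_bigr => j _.
by rewrite EFinM fineK ?fin_num_measure.
Qed.

Lemma emp_freq01 (k : nat) (xs : 'I_k -> X) (g : X -> bool) : (0 < k)%N ->
  0 <= emp_freq (R:=R) xs g <= 1.
Proof.
move=> k0; rewrite /emp_freq; apply/andP; split.
  by rewrite divr_ge0 // sumr_ge0.
rewrite ler_pdivrMr ?ltr0n // mul1r.
apply: (@le_trans _ _ (\sum_(i < k) (1 : R))); last by rewrite sumr_const card_ord.
by apply: ler_sum => i _; case: (g (xs i)).
Qed.

End Helpers.

Theorem theorem1
  (R : realType) (dX : measure_display) (X : measurableType dX)
  (H : set (X -> bool)) (d : nat) (M : nat)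
  (S : 'I_M -> probability X R) (fS : 'I_M -> X -> bool)
  (T : probability X R) (fT : X -> bool)
  (n : nat) (delta : R) (h : X -> bool) (alpha : 'I_M -> R)
  (dO : measure_display) (O : measurableType dO) (P : probability O R)
  (Xs : 'I_M -> 'I_(n %/ M) -> O -> X) (Xt Xa : 'I_n -> O -> X) :
  VCdim H d ->
  (forall g, H g -> measurable [set x | g x]) ->
  (forall j, measurable [set x | fS j x]) ->
  measurable [set x | fT x] ->
  (1 <= M)%N -> (0 < n)%N -> (M %| n)%N ->
  0 < delta < 1 ->
  H h -> simplex alpha ->
  (forall k, measurable_fun setT (all_samples Xs Xt Xa k)) ->
  mutually_independent P (all_samples Xs Xt Xa) ->
  (forall j i A, measurable A -> P (Xs j i @^-1` A) = S j A) ->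
  (forall i A, measurable A -> P (Xt i @^-1` A) = T A) ->
  (forall i A, measurable A -> P (Xa i @^-1` A) = mixture alpha S A) ->
  let B := 2 * Num.sqrt ((M%:R * (2 * d%:R * ln (2 * (n%:R + 1)) + ln (8 / delta)))
                          / n%:R * \sum_(j < M) alpha j ^+ 2) in
  let lambda := inf [set (\sum_(j < M) alpha j * risk (S j) (fS j) h') + risk T fT h'
                     | h' in H] in
  let V := 2 * Num.sqrt ((2 * d%:R * ln (2 * n%:R) + ln (4 / delta)) / n%:R) in
  exists E : set O, measurable E /\ (P E >= (1 - delta)%:E)%E /\
    forall w, E w ->
      risk T fT h <=
        (\sum_(j < M) alpha j * emp_risk (fun i => Xs j i w) (fS j) h)
        + 1 / 2 * emp_div (symdiff_class H) (fun i => Xa i w) (fun i => Xt i w)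
        + lambda + B + V.
Proof.
move=> VC Hmeas fSm fTm M1 n0 Mn /andP[d0 d1] Hh [a0 a1] mZ ind lawS lawT lawA B lambda V.
set m := (n %/ M)%N.
have m0 : (0 < m)%N.
  rewrite divn_gt0; last lia. by apply: dvdn_leq.
have nE : n%:R = m%:R * M%:R :> R by rewrite -natrM divnK.
have n0R : (0 < n%:R :> R) by rewrite ltr0n.
have m0R : (0 < m%:R :> R) by rewrite ltr0n.
have M0R : (0 < M%:R :> R) by rewrite ltr0n.
set t2 := 2 * Num.sqrt (ln (2 / delta) / n%:R).
have l2 : 0 < ln (2 / delta).
  by apply: ln_gt0; rewrite ltr_pdivlMr // mul1r; lra.
have t2pos : 0 < t2 by rewrite mulr_gt0 // sqrtr_gt0 divr_gt0.
have t2V : t2 < V.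
  have l4 : ln (2 / delta) < ln (4 / delta).
    rewrite ltr_ln ?posrE ?divr_gt0 //.
    by rewrite ltr_pM2r ?invr_gt0 //; lra.
  have ln2n : 0 <= ln (2 * n%:R : R).
    apply: ln_ge0; have : (1 <= n%:R :> R) by rewrite ler1n.
    lra.
  have dd : 0 <= 2 * d%:R * ln (2 * n%:R : R) by rewrite mulr_ge0 // mulr_ge0.
  rewrite /V /t2 ltr_pM2l // ltr_sqrt; last by rewrite divr_gt0 //; lra.
  by rewrite ltr_pM2r ?invr_gt0 //; lra.
set eta := V - t2.
have eta0 : 0 < eta by rewrite subr_gt0.
have risk_ge0 (D : probability X R) f h0 : 0 <= risk D f h0 by rewrite /risk fine_ge0.
have hinf : has_inf [set \sum_(j < M) alpha j * risk (S j) (fS j) h' + risk T fT h' | h' in H].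
  split; first by exists (\sum_(j < M) alpha j * risk (S j) (fS j) h + risk T fT h); exists h.
  exists 0 => _ [h0 _ <-]; rewrite addr_ge0 // sumr_ge0 // => j _.
  by rewrite mulr_ge0.
have [e [h' Hh' <-] He] := inf_adherent eta0 hinf.
rewrite -/lambda in He.
pose g := fun x => xorb (h x) (h' x).
have mg : measurable [set x | g x].
  have -> : [set x | g x] = [set x | h x != h' x].
    by apply/seteqP; split => x /=; rewrite /g; case: (h x); case: (h' x).
  by apply: meas_neq; apply: Hmeas.
pose I := ('I_M * 'I_m + ('I_n + 'I_n))%type.
pose Z : I -> O -> X := all_samples Xs Xt Xa.
pose Af : I -> set X := fun k => match k with
  | inl p => [set x | h x != fS p.1 x] | inr _ => [set x | g x] end.
have mAf : forall k, measurable (Af k).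
  by case => [p|k]; [apply: meas_neq; [apply: Hmeas | apply: fSm] | exact: mg].
pose c1 : I -> R := fun k => match k with
  | inl p => - (alpha p.1 / m%:R) | inr _ => 0 end.
pose c2 : I -> R := fun k => match k with
  | inl _ => 0 | inr (inl _) => - n%:R^-1 | inr (inr _) => n%:R^-1 end.
have C1 : \sum_k c1 k ^+ 2 = (\sum_j alpha j ^+ 2) / m%:R.
  rewrite big_sumType /= [X in _ + X]big1 ?addr0 //; last by move=> k _; rewrite expr0n.
  under eq_bigr do rewrite sqrrN.
  have PB := pair_bigA _ (fun (j : 'I_M) (i : 'I_m) => (alpha j / m%:R) ^+ 2).
  rewrite /= in PB; rewrite -PB mulr_suml; apply: eq_bigr => j _; rewrite sumr_const card_ord.
  by rewrite -mulr_natr; field; rewrite gt_eqF.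
have C2 : \sum_k c2 k ^+ 2 = 2 / n%:R.
  rewrite big_sumType /= [X in X + _]big1 ?add0r //; last by move=> k _; rewrite expr0n.
  rewrite (eq_bigr (fun _ => (n%:R^-1) ^+ 2)); last by case => k _; rewrite ?sqrrN.
  rewrite sumr_const card_sum !card_ord.
  have -> : forall x : R, x *+ (n + n) = (n + n)%:R * x by move=> x; rewrite mulr_natl.
  rewrite natrD.
  by field; rewrite gt_eqF.
have sa2 : 0 < \sum_j alpha j ^+ 2.
  rewrite lt_def sumr_ge0 ?andbT; last by move=> j _; exact: sqr_ge0.
  apply/negP => /eqP/psumr_eq0P H0.
  have : \sum_j alpha j = 0.
    by apply: big1 => j _; apply/eqP; rewrite -sqrf_eq0 H0 // => k _; exact: sqr_ge0.
  by rewrite a1 => /eqP; rewrite oner_eq0.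
set L := 2 * d%:R * ln (2 * (n%:R + 1)) + ln (8 / delta).
have l8 : 0 < ln (8 / delta).
  by apply: ln_gt0; rewrite ltr_pdivlMr // mul1r; lra.
have lnn : 0 <= ln (2 * (n%:R + 1) : R).
  apply: ln_ge0; have : (0 <= n%:R :> R) by [].
  lra.
have Lge : ln (8 / delta) <= L.
  by rewrite /L lerDr mulr_ge0 // mulr_ge0.
have XB0 : 0 <= M%:R * L / n%:R * \sum_j alpha j ^+ 2.
  apply: mulr_ge0; last by apply: sumr_ge0 => j _; exact: sqr_ge0.
  apply: divr_ge0; last exact: ltW.
  by apply: mulr_ge0; [exact: ltW | lra].
have Bpos : 0 < B.
  rewrite /B mulr_gt0 // sqrtr_gt0 mulr_gt0 // divr_gt0 // mulr_gt0 //.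
  exact: lt_le_trans l8 Lge.
pose S1 w := \sum_k c1 k * ((bit I Z Af k w)%:R - pr P I Z Af k).
pose S2 w := \sum_k c2 k * ((bit I Z Af k w)%:R - pr P I Z Af k).
pose bad1 := [set w | B <= S1 w].
pose bad2 := [set w | t2 <= S2 w].
have mb1 : measurable bad1 := meas_sumevent P I Z Af mZ mAf c1 B.
have mb2 : measurable bad2 := meas_sumevent P I Z Af mZ mAf c2 t2.
have c1pos : 0 < \sum_k c1 k ^+ 2 by rewrite C1 divr_gt0.
have c2pos : 0 < \sum_k c2 k ^+ 2 by rewrite C2 divr_gt0.
have P1 : (P bad1 <= (delta / 8)%:E)%E.
  have Hc := chernoff_opt P I Z Af mZ mAf ind c1 B Bpos c1pos.
  apply: le_trans Hc _; rewrite lee_fin C1.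
  have -> : B ^+ 2 / (2 * ((\sum_j alpha j ^+ 2) / m%:R)) = 2 * L.
    rewrite /B -/L exprMn sqr_sqrtr // nE; field.
    by rewrite !gt_eqF.
  apply: (@le_trans _ _ (expR (- ln (8 / delta)))).
    by rewrite ler_expR; lra.
  by rewrite expRN lnK ?posrE ?divr_gt0 // invf_div.
have P2 : (P bad2 <= (delta / 2)%:E)%E.
  have Hc := chernoff_opt P I Z Af mZ mAf ind c2 t2 t2pos c2pos.
  apply: le_trans Hc _; rewrite lee_fin C2.
  have -> : t2 ^+ 2 / (2 * (2 / n%:R)) = ln (2 / delta).
    rewrite /t2 exprMn sqr_sqrtr ?divr_ge0 ?ltW //; field.
    by rewrite !gt_eqF.
  by rewrite expRN lnK ?posrE ?divr_gt0 // invf_div.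
pose pt := fine (T [set x | g x]).
pose pa := fine (mixture alpha S [set x | g x]).
have mhf j : measurable [set x | h x != fS j x] by apply: meas_neq; [apply: Hmeas | apply: fSm].
have bit1 w j i : bit I Z Af (inl (j, i)) w = (h (Xs j i w) != fS j (Xs j i w)).
  by rewrite /bit /= asboolb.
have bit2 w i : bit I Z Af (inr (inl i)) w = g (Xt i w) by rewrite /bit /= asboolb.
have bit3 w i : bit I Z Af (inr (inr i)) w = g (Xa i w) by rewrite /bit /= asboolb.
have pr1 j i : pr P I Z Af (inl (j, i)) = risk (S j) (fS j) h by rewrite /pr /= lawS.
have pr2 i : pr P I Z Af (inr (inl i)) = pt by rewrite /pr /= lawT.
have pr3 i : pr P I Z Af (inr (inr i)) = pa by rewrite /pr /= lawA.
have S1E w : S1 w = \sum_j alpha j * risk (S j) (fS j) h -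
                    \sum_j alpha j * emp_risk (fun i => Xs j i w) (fS j) h.
  rewrite /S1 big_sumType /= [X in _ + X]big1 ?addr0; last by move=> k _; rewrite mul0r.
  pose F := fun j (i : 'I_m) => - (alpha j / m%:R) *
     ((h (Xs j i w) != fS j (Xs j i w))%:R - risk (S j) (fS j) h).
  rewrite (eq_bigr (fun p => F p.1 p.2)); last by move=> [j i] _; rewrite bit1 pr1.
  rewrite -pair_bigA -sumrB; apply: eq_bigr => j _; rewrite /F /emp_risk.
  rewrite -mulr_sumr sumrB sumr_const card_ord.
  have -> : forall x : R, x *+ m = x * m%:R by move=> x; rewrite mulr_natr.
  by field; rewrite gt_eqF.
have S2E w : S2 w = (emp_freq (fun i => Xa i w) g - pa) - (emp_freq (fun i => Xt i w) g - pt).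
  rewrite /S2 big_sumType /= [X in X + _]big1 ?add0r; last by move=> k _; rewrite mul0r.
  rewrite big_sumType /=.
  rewrite (eq_bigr (fun i => - n%:R^-1 * ((g (Xt i w))%:R - pt))); last by move=> i _; rewrite bit2 pr2.
  rewrite [X in _ + X](eq_bigr (fun i => n%:R^-1 * ((g (Xa i w))%:R - pa))); last by move=> i _; rewrite bit3 pr3.
  rewrite /emp_freq -!mulr_sumr !sumrB !sumr_const !card_ord.
  have -> : forall x : R, x *+ n = x * n%:R by move=> x; rewrite mulr_natr.
  by field; rewrite gt_eqF.
exists (~` (bad1 `|` bad2)); split; first exact/measurableC/measurableU.
split.
  rewrite probability_setC; last exact: measurableU.
  have U1 : (P (bad1 `|` bad2) <= (delta / 8 + delta / 2)%:E)%E.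
    apply: (le_trans (measureU2 P mb1 mb2)); rewrite EFinD; exact: leeD.
  rewrite -(fineK (fin_num_measure P _ (measurableU _ _ mb1 mb2))) in U1 *.
  rewrite lee_fin in U1; rewrite -EFinB lee_fin; lra.
move=> w /= Hw.
have hS1 : S1 w < B by rewrite ltNge; apply/negP => Hb; apply: Hw; left.
have hS2 : S2 w < t2 by rewrite ltNge; apply/negP => Hb; apply: Hw; right.
rewrite S1E in hS1; rewrite S2E in hS2.
set ea := emp_freq (fun i => Xa i w) g in hS2.
set et := emp_freq (fun i => Xt i w) g in hS2.
have mhT : measurable [set x | h x != fT x] by apply: meas_neq; [apply: Hmeas | ].
have mhT' : measurable [set x | h' x != fT x] by apply: meas_neq; [apply: Hmeas | ].
have D1 : risk T fT h <= risk T fT h' + pt.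
  apply: fine_sub => // x /=; rewrite /g.
  by case: (h x); case: (h' x); case: (fT x) => //=; auto.
have D2 : pa <= \sum_j alpha j * risk (S j) (fS j) h + \sum_j alpha j * risk (S j) (fS j) h'.
  rewrite /pa mixtureE // /= -big_split /=; apply: ler_sum => j _.
  rewrite -mulrDr; apply: ler_wpM2l => //.
  apply: fine_sub; [exact: mg | exact: mhf | by apply: meas_neq; [apply: Hmeas | apply: fSm] | ].
  by move=> x /=; rewrite /g; case: (h x); case: (h' x); case: (fS j x) => //=; auto.
have D3 : `|ea - et| <= 1 / 2 * emp_div (symdiff_class H) (fun i => Xa i w) (fun i => Xt i w).
  rewrite /emp_div mulrA (_ : 1 / 2 * 2 = 1 :> R) ?mul1r; last by field.
  apply: ub_le_sup; last first.
    by exists g => //; exists h; exists h'; split; [|split].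
  exists 1 => _ [g' _ <-].
  have := emp_freq01 (R:=R) _ (fun i => Xa i w) g' n0; have := emp_freq01 (R:=R) _ (fun i => Xt i w) g' n0.
  move=> /andP[? ?] /andP[? ?]; rewrite ler_norml; apply/andP; split; lra.
have D4 : pt - pa <= t2 + `|ea - et|.
  have := ler_norm (et - ea); rewrite distrC; lra.
rewrite -/lambda.
have := He; rewrite /eta => He'.
lra.
Qed.
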